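(* Let $d\ge 2$ and $1\le k\le d$. For $i=1,\dots,k-1$ let $\mathbf W_i\in\mathcal B_i$, and let $\mathbf W_k\in\mathcal B_k$. Put $w_1=(\mathbf W_1,\dots,\mathbf W_{k-1},\mathbf W_k,M_{k+1},\dots,M_d)$ and $w_2=(\mathbf W_1,\dots,\mathbf W_{k-1},M_k,M_{k+1},\dots,M_d)$. Then for all $x\in\mathcal X$, $$|h_{w_1}(x)-h_{w_2}(x)|_2\le \alpha_k\exp\Big(\sum_{i=1}^{k-1}\alpha_i\Big)\,M\,|x|_2 .$$
   Context: Let $m,\delta_1,\dots,\delta_d$ be positive integers, $\delta_0=m$, $R>0$, and $\mathcal X=\{x\in\mathbb R^m:|x|_2\le R\}$ ($|\cdot|_2$ the Euclidean norm). For $1\le j\le d$ fix a matrix $M_j\in\mathbb R^{\delta_j\times\delta_{j-1}}$ with $\|M_j\|_2>0$ ($\|\cdot\|_2$ the spectral norm) and a number $\alpha_j>0$, and let $\mathcal B_j=\{\mathbf W\in\mathbb R^{\delta_j\times\delta_{j-1}}:\|\mathbf W-M_j\|_2\le\alpha_j\|M_j\|_2\}$. Let $\phi$ be an activation (acting on vectors of every relevant dimension, e.g. the entrywise ReLU) that is $1$-Lipschitz with respect to the Euclidean norm and satisfies $\phi(0)=0$, and let $\phi_o$ be either the identity map or the soft-max function on $\mathbb R^{\delta_d}$. For $w=(\mathbf W_1,\dots,\mathbf W_d)$ define $h_w:\mathcal X\to\mathbb R^{\delta_d}$ by $h_w(x)=\phi_o(\mathbf W_d\,\phi(\mathbf W_{d-1}\cdots\phi(\mathbf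 W_1x)\cdots))$. Let $M=\prod_{j=1}^d\|M_j\|_2$. *)

(* Defs.v *)
From HB Require Import structures.
From mathcomp Require Import all_boot all_order all_algebra.
From mathcomp Require Import all_classical all_reals all_analysis.
Set Implicit Arguments. Unset Strict Implicit. Unset Printing Implicit Defensive.
Import Order.TTheory GRing.Theory Num.Theory.
Local Open Scope classical_set_scope.
Local Open Scope ring_scope.

Section Defs.
Variable R : realType.

Definition e2norm (n : nat) (v : 'cV[R]_n) : R :=
  Num.sqrt (\sum_(i < n) v i 0 ^+ 2).

Definition specnorm (p q : nat) (A : 'M[R]_(p, q)) : R :=
  sup [set e2norm (A *m v) | v in [set v : 'cV[R]_q | e2norm v <= 1]].

Definition softmax (n : nat) (v : 'cV[R]_n) : 'cV[R]_n :=
  \col_i (expR (v i 0) / \sum_(j < n) expR (v j 0)).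

(* activation applied after layer j (identity on the input, j = 0) *)
Definition act (phi : forall n, 'cV[R]_n -> 'cV[R]_n) (j n : nat)
  (v : 'cV[R]_n) : 'cV[R]_n := if j == 0%N then v else phi n v.

(* pre-activations: pre 0 = x, pre (j+1) = W_{j+1} phi(pre j)  (no phi at j=0)
   W j is the weight matrix of layer j (j = 1..d), in R^{delta j x delta (j-1)};
   W 0 is unused. *)
Fixpoint pre (delta : nat -> nat) (phi : forall n, 'cV[R]_n -> 'cV[R]_n)
  (W : forall j : nat, 'M[R]_(delta j, delta j.-1)) (x : 'cV[R]_(delta 0%N))
  (j : nat) : 'cV[R]_(delta j) :=
  match j with
  | 0 => x
  | k.+1 => W k.+1 *m act phi k (pre phi W x k)
  end.

Definition net (delta : nat -> nat) (d : nat)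
  (phi : forall n, 'cV[R]_n -> 'cV[R]_n)
  (phio : 'cV[R]_(delta d) -> 'cV[R]_(delta d))
  (W : forall j : nat, 'M[R]_(delta j, delta j.-1)) (x : 'cV[R]_(delta 0%N))
  : 'cV[R]_(delta d) := phio (pre phi W x d).

End Defs.

(* Main.v *)
Require Import Defs.
From HB Require Import structures.
From mathcomp Require Import all_boot all_order all_algebra.
From mathcomp Require Import all_classical all_reals all_analysis.
From mathcomp Require Import ring lra zify.
Import Order.TTheory GRing.Theory Num.Theory.
Set Implicit Arguments. Unset Strict Implicit.
Local Open Scope ring_scope.

Section Norms.
Variable R : realType.
Implicit Types (n : nat).

Local Notation N := (e2norm (R:=R)).

Lemma sumsq_ge0 n (v : 'cV[R]_n) : 0 <= \sum_(i < n) v i 0 ^+ 2.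
Proof. by apply: sumr_ge0 => i _; rewrite sqr_ge0. Qed.

Lemma e2norm_ge0 n (v : 'cV[R]_n) : 0 <= N v.
Proof. exact: sqrtr_ge0. Qed.

Lemma e2normE2 n (v : 'cV[R]_n) : N v ^+ 2 = \sum_(i < n) v i 0 ^+ 2.
Proof. by rewrite /e2norm sqr_sqrtr // sumsq_ge0. Qed.

Lemma e2norm_le n (v : 'cV[R]_n) a : 0 <= a ->
  \sum_(i < n) v i 0 ^+ 2 <= a ^+ 2 -> N v <= a.
Proof.
move=> a0 h; rewrite /e2norm -(ger0_norm a0) -sqrtr_sqr.
by rewrite ler_sqrt // sqr_ge0.
Qed.

Lemma e2norm_le_sq n (u : 'cV[R]_n) (v : 'cV[R]_n) :
  \sum_(i < n) u i 0 ^+ 2 <= \sum_(i < n) v i 0 ^+ 2 -> N u <= N v.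
Proof. by move=> h; rewrite /e2norm ler_sqrt // sumsq_ge0. Qed.

Lemma CS n (u v : 'cV[R]_n) :
  (\sum_(i < n) u i 0 * v i 0) ^+ 2 <=
  (\sum_(i < n) u i 0 ^+ 2) * (\sum_(i < n) v i 0 ^+ 2).
Proof.
have H : 0 <= \sum_(i < n) \sum_(j < n) (u i 0 * v j 0 - u j 0 * v i 0) ^+ 2.
  by apply: sumr_ge0 => i _; apply: sumr_ge0 => j _; rewrite sqr_ge0.
have E : \sum_(i < n) \sum_(j < n) (u i 0 * v j 0 - u j 0 * v i 0) ^+ 2 =
  2 * ((\sum_(i < n) u i 0 ^+ 2) * (\sum_(i < n) v i 0 ^+ 2)
       - (\sum_(i < n) u i 0 * v i 0) ^+ 2).
  have E1 : \sum_(i < n) \sum_(j < n) (u i 0 * v j 0 - u j 0 * v i 0) ^+ 2 =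
    \sum_(i < n) \sum_(j < n) (u i 0 ^+ 2 * v j 0 ^+ 2)
    + \sum_(i < n) \sum_(j < n) (u j 0 ^+ 2 * v i 0 ^+ 2)
    - 2 * \sum_(i < n) \sum_(j < n) ((u i 0 * v i 0) * (u j 0 * v j 0)).
    rewrite mulr_sumr -!big_split -sumrB /=; apply: eq_bigr => i _.
    rewrite mulr_sumr -!big_split -sumrB /=; apply: eq_bigr => j _.
    ring.
  have e1 : (\sum_(i < n) u i 0 ^+ 2) * (\sum_(i < n) v i 0 ^+ 2) =
      \sum_(i < n) \sum_(j < n) (u i 0 ^+ 2 * v j 0 ^+ 2).
    by rewrite mulr_suml; apply: eq_bigr => i _; rewrite mulr_sumr.
  have e2 : (\sum_(i < n) u i 0 ^+ 2) * (\sum_(i < n) v i 0 ^+ 2) =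
      \sum_(i < n) \sum_(j < n) (u j 0 ^+ 2 * v i 0 ^+ 2).
    rewrite mulrC mulr_suml; apply: eq_bigr => i _; rewrite mulr_sumr.
    by apply: eq_bigr => j _; rewrite mulrC.
  have e3 : (\sum_(i < n) u i 0 * v i 0) ^+ 2 =
      \sum_(i < n) \sum_(j < n) ((u i 0 * v i 0) * (u j 0 * v j 0)).
    by rewrite expr2 mulr_suml; apply: eq_bigr => i _; rewrite mulr_sumr.
  rewrite E1 -e1 -e2 -e3; ring.
rewrite E in H; rewrite -subr_ge0; lra.
Qed.


Lemma e2normD n (u v : 'cV[R]_n) : N (u + v) <= N u + N v.
Proof.
apply: e2norm_le; first by rewrite addr_ge0 // e2norm_ge0.
have hu := e2normE2 u; have hv := e2normE2 v.
have cs := CS u v.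
have -> : \sum_(i < n) (u + v) i 0 ^+ 2 =
   \sum_(i < n) u i 0 ^+ 2 + \sum_(i < n) v i 0 ^+ 2 + 2 * \sum_(i < n) u i 0 * v i 0.
  rewrite mulr_sumr -!big_split /=; apply: eq_bigr => i _; rewrite !mxE; ring.
set B := \sum_(i < n) _ in cs *.
have nu := e2norm_ge0 u; have nv := e2norm_ge0 v.
rewrite -hu -hv in cs.
have : B <= N u * N v.
  have P0 : 0 <= N u * N v by rewrite mulr_ge0.
  rewrite -exprMn in cs; nra.
nra.
Qed.

Lemma e2normN n (v : 'cV[R]_n) : N (- v) = N v.
Proof. by rewrite /e2norm; congr Num.sqrt; apply: eq_bigr => i _; rewrite mxE sqrrN. Qed.

Lemma e2normBC n (u v : 'cV[R]_n) : N (u - v) = N (v - u).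
Proof. by rewrite -opprB e2normN. Qed.

Lemma e2normZ n a (v : 'cV[R]_n) : N (a *: v) = `|a| * N v.
Proof.
rewrite /e2norm -sqrtr_sqr -sqrtrM ?sqr_ge0 //; congr Num.sqrt.
by rewrite mulr_sumr; apply: eq_bigr => i _; rewrite mxE exprMn.
Qed.

Lemma e2norm0 n : N (0 : 'cV[R]_n) = 0.
Proof. by rewrite -(scale0r 0) e2normZ normr0 mul0r. Qed.

Lemma entry_le n (v : 'cV[R]_n) i : `|v i 0| <= N v.
Proof.
rewrite -sqrtr_sqr /e2norm ler_sqrt ?sumsq_ge0 //.
rewrite (bigD1 i) //= lerDl; apply: sumr_ge0 => j _; exact: sqr_ge0.
Qed.

Lemma e2norm_le_l1 n (v : 'cV[R]_n) : N v <= \sum_(i < n) `|v i 0|.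
Proof.
apply: e2norm_le; first by apply: sumr_ge0 => i _.
rewrite expr2 mulr_suml; apply: ler_sum => i _.
rewrite -(real_normK (num_real (v i 0))) expr2; apply: ler_wpM2l => //.
by rewrite (bigD1 i) //= lerDl; apply: sumr_ge0 => j _.
Qed.

Lemma opbound p q (A : 'M[R]_(p, q)) (v : 'cV[R]_q) :
  N (A *m v) <= (\sum_(i < p) \sum_(j < q) `|A i j|) * N v.
Proof.
apply: le_trans (e2norm_le_l1 _) _.
rewrite mulr_suml; apply: ler_sum => i _; rewrite mxE mulr_suml.
apply: le_trans (ler_norm_sum _ _ _) _; apply: ler_sum => j _.
by rewrite normrM; apply: ler_wpM2l => //; exact: entry_le.
Qed.

Lemma specnorm_bound p q (A : 'M[R]_(p, q)) (v : 'cV[R]_q) :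
  N (A *m v) <= specnorm A * N v.
Proof.
set C := \sum_(i < p) \sum_(j < q) `|A i j|.
have C0 : 0 <= C by apply: sumr_ge0 => i _; apply: sumr_ge0.
have hub : has_ubound [set e2norm (A *m v) | v in [set v : 'cV[R]_q | e2norm v <= 1]].
  exists C => x [w /= hw <-]; apply: le_trans (opbound A w) _.
  by rewrite -[leRHS]mulr1 ler_wpM2l.
have s0 : 0 <= specnorm A.
  apply: le_trans (ub_le_sup hub _); first exact: (e2norm_ge0 (A *m 0)).
  by exists 0; rewrite //= e2norm0.
have [h0|nz] := eqVneq (N v) 0.
  by rewrite h0 mulr0; have := opbound A v; rewrite h0 mulr0.
have t0 : 0 < N v by rewrite lt_def nz e2norm_ge0.
have hw : N ((N v)^-1 *: v) = 1.
  by rewrite e2normZ ger0_norm ?invr_ge0 ?e2norm_ge0 // mulVf.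
have hw1 : N ((N v)^-1 *: v) <= 1 by rewrite hw.
have := ub_le_sup hub (ex_intro2 _ _ ((N v)^-1 *: v) hw1 erefl).
rewrite -scalemxAr e2normZ ger0_norm ?invr_ge0 ?e2norm_ge0 //.
by rewrite ler_pdivrMl // mulrC.
Qed.

Lemma d2 (a b x : R) : is_derive x 1 (fun t => expR (a + t * b)) (expR (a + x * b) * b).
Proof.
apply: is_derive_eq.
rewrite scaler0 add0r mul1r add0r; congr (_ * _); exact: mulr1.
Qed.
Lemma dS n (a b : 'I_n -> R) (x : R) : is_derive x 1 (fun t => \sum_(j < n) expR (a j + t * b j))
   (\sum_(j < n) expR (a j + x * b j) * b j).
Proof.
have -> : (fun t => \sum_(j < n) expR (a j + t * b j)) = \sum_(j < n) (fun t => expR (a j + t * b j)).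
  by rewrite fct_sumE.
apply: is_derive_sum => j; exact: d2.
Qed.
Lemma dQ n (a b : 'I_n -> R) (a0 b0 : R) (x : R) :
  let S := fun t => \sum_(j < n) expR (a j + t * b j) in
  S x != 0 ->
  is_derive x 1 (fun t => expR (a0 + t * b0) / S t)
   (expR (a0 + x * b0) * b0 / S x - expR (a0 + x * b0) * (\sum_(j < n) expR (a j + x * b j) * b j) / S x ^+ 2).
Proof.
move=> S Sx.
have h1 := d2 a0 b0 x.
have h2 := is_deriveV Sx (dS a b x).
have h3 := is_deriveM h1 h2.
apply: is_derive_eq.
rewrite -![_ *: _]/(_ * _).
by field.
Qed.


Lemma var_le n (p x : 'I_n -> R) : (forall i, 0 <= p i) -> \sum_(i < n) p i = 1 ->
  (\sum_(i < n) p i * x i) ^+ 2 <= \sum_(i < n) p i * x i ^+ 2.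
Proof.
move=> p0 p1; set X := \sum_(i < n) p i * x i.
have H : 0 <= \sum_(i < n) p i * (x i - X) ^+ 2.
  by apply: sumr_ge0 => i _; rewrite mulr_ge0 ?sqr_ge0.
have E : \sum_(i < n) p i * (x i - X) ^+ 2 =
   \sum_(i < n) p i * x i ^+ 2 - 2 * X * X + X ^+ 2 * \sum_(i < n) p i.
  rewrite (eq_bigr (fun i => (p i * x i ^+ 2 - (2 * X) * (p i * x i)) + X ^+ 2 * p i));
    last by move=> i _; ring.
  by rewrite big_split /= sumrB -!mulr_sumr.
rewrite E p1 in H; lra.
Qed.

Lemma cov_bound n (p h c : 'I_n -> R) : (forall i, 0 <= p i) -> \sum_(i < n) p i = 1 ->
  \sum_(i < n) c i * (p i * h i) - (\sum_(i < n) c i * p i) * (\sum_(i < n) p i * h i)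
  <= (\sum_(i < n) h i ^+ 2 + \sum_(i < n) c i ^+ 2) / 2.
Proof.
move=> p0 p1.
have ple1 i : p i <= 1.
  by rewrite -p1 (bigD1 i) //= lerDl; apply: sumr_ge0 => j _.
have V := var_le (fun i => h i - c i) p0 p1.
have e1 : \sum_(i < n) p i * (h i - c i) =
   \sum_(i < n) p i * h i - \sum_(i < n) c i * p i.
  by rewrite -sumrB; apply: eq_bigr => i _; ring.
have e2 : \sum_(i < n) p i * (h i - c i) ^+ 2 =
   \sum_(i < n) p i * h i ^+ 2 + \sum_(i < n) p i * c i ^+ 2
   - 2 * \sum_(i < n) c i * (p i * h i).
  rewrite mulr_sumr -big_split -sumrB /=; apply: eq_bigr => i _; ring.
rewrite /= e1 e2 in V.
have l1 : \sum_(i < n) p i * h i ^+ 2 <= \sum_(i < n) h i ^+ 2.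
  apply: ler_sum => i _; rewrite -[leRHS]mul1r; apply: ler_wpM2r => //; exact: sqr_ge0.
have l2 : \sum_(i < n) p i * c i ^+ 2 <= \sum_(i < n) c i ^+ 2.
  apply: ler_sum => i _; rewrite -[leRHS]mul1r; apply: ler_wpM2r => //; exact: sqr_ge0.
set A := \sum_(i < n) p i * h i in V *.
set C := \sum_(i < n) c i * p i in V *.
have : 0 <= A ^+ 2 by exact: sqr_ge0.
have : 0 <= C ^+ 2 by exact: sqr_ge0.
nra.
Qed.

Lemma softmax_lip n (u v : 'cV[R]_n) :
  e2norm (softmax u - softmax v) <= e2norm (u - v).
Proof.
case: n u v => [|n] u v; first by rewrite /e2norm !big_ord0.
pose c := fun i : 'I_n.+1 => ((softmax u - softmax v) i 0 : R).
pose h := fun i : 'I_n.+1 => (u i 0 - v i 0 : R).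
pose a := fun i : 'I_n.+1 => (v i 0 : R).
pose S := fun t : R => \sum_(j < n.+1) expR (a j + t * h j).
have Spos t : 0 < S t.
  rewrite /S (bigD1 ord0) //= ltr_pwDl ?expR_gt0 //.
  by apply: sumr_ge0 => j _; rewrite ltW ?expR_gt0.
pose f := fun t : R => \sum_(i < n.+1) c i * (expR (a i + t * h i) / S t).
pose df := fun t : R => \sum_(i < n.+1) c i *
   (expR (a i + t * h i) * h i / S t -
    expR (a i + t * h i) * (\sum_(j < n.+1) expR (a j + t * h j) * h j) / S t ^+ 2).
have Hd (t : R) : is_derive t 1 f (df t).
  have -> : f = \sum_(i < n.+1) (fun t => c i * (expR (a i + t * h i) / S t)).
    by rewrite fct_sumE.
  apply: is_derive_sum => i.
  have := @dQ _ a h (a i) (h i) t (lt0r_neq0 (Spos t)).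
  move=> H.
  by apply: is_derive_eq.
have cont : ({within `[0, 1], continuous f})%classic.
  apply: derivable_within_continuous => t _.
  by case: (Hd t).
have [s _ E] := MVT ltr01 (fun t _ => Hd t) cont.
have f1 : f 1 = \sum_(i < n.+1) c i * softmax u i 0.
  apply: eq_bigr => i _; rewrite /softmax mxE /S /a /h.
  congr (_ * (_ / _)); first by rewrite mul1r addrC subrK.
  by apply: eq_bigr => j _; rewrite mul1r addrC subrK.
have f0 : f 0 = \sum_(i < n.+1) c i * softmax v i 0.
  apply: eq_bigr => i _; rewrite /softmax mxE /S /a /h.
  congr (_ * (_ / _)); first by rewrite mul0r addr0.
  by apply: eq_bigr => j _; rewrite mul0r addr0.
have fc : f 1 - f 0 = \sum_(i < n.+1) c i ^+ 2.
  rewrite f1 f0 -sumrB; apply: eq_bigr => i _; rewrite /c !mxE; ring.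
pose p := fun i => expR (a i + s * h i) / S s.
have p0 i : 0 <= p i by rewrite /p divr_ge0 // ?ltW ?expR_gt0 ?Spos.
have p1 : \sum_(i < n.+1) p i = 1.
  by rewrite /p -mulr_suml divff // lt0r_neq0 ?Spos.
have dfE : df s = \sum_(i < n.+1) c i * (p i * h i)
    - (\sum_(i < n.+1) c i * p i) * (\sum_(i < n.+1) p i * h i).
  rewrite /df /p.
  have -> : \sum_(i < n.+1) expR (a i + s * h i) / S s * h i =
     (\sum_(j < n.+1) expR (a j + s * h j) * h j) / S s.
    by rewrite mulr_suml; apply: eq_bigr => i _; rewrite mulrAC.
  rewrite mulr_suml -sumrB; apply: eq_bigr => i _.
  have := Spos s; rewrite -/(S s) => Ss.
  field; exact: lt0r_neq0.
have cb := cov_bound h c p0 p1.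
rewrite dfE fc subr0 mulr1 in E.
apply: e2norm_le_sq.
have -> : \sum_(i < n.+1) (softmax u - softmax v) i 0 ^+ 2 = \sum_(i < n.+1) c i ^+ 2 by [].
have -> : \sum_(i < n.+1) (u - v) i 0 ^+ 2 = \sum_(i < n.+1) h i ^+ 2.
  by apply: eq_bigr => i _; rewrite /h !mxE.
lra.
Qed.


Lemma specnorm_ge0 p q (A : 'M[R]_(p, q)) : 0 <= specnorm A.
Proof.
set C := \sum_(i < p) \sum_(j < q) `|A i j|.
have C0 : 0 <= C by apply: sumr_ge0 => i _; apply: sumr_ge0.
have hub : has_ubound [set e2norm (A *m v) | v in [set v : 'cV[R]_q | e2norm v <= 1]].
  exists C => x [w /= hw <-]; apply: le_trans (opbound A w) _.
  by rewrite -[leRHS]mulr1 ler_wpM2l.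
apply: le_trans (ub_le_sup hub _); first exact: (e2norm_ge0 (A *m 0)).
by exists 0; rewrite //= e2norm0.
Qed.

End Norms.

Section Main.
Variable R : realType.
Local Notation N := (e2norm (R:=R)).

Lemma phi_norm (phi : forall n, 'cV[R]_n -> 'cV[R]_n)
  (hphi_lip : forall n (u v : 'cV[R]_n), N (phi n u - phi n v) <= N (u - v))
  (hphi0 : forall n, phi n 0 = 0) n (u : 'cV[R]_n) : N (phi n u) <= N u.
Proof. by have := hphi_lip n u 0; rewrite hphi0 !subr0. Qed.

Lemma act_norm (phi : forall n, 'cV[R]_n -> 'cV[R]_n)
  (hphi_lip : forall n (u v : 'cV[R]_n), N (phi n u - phi n v) <= N (u - v))
  (hphi0 : forall n, phi n 0 = 0) j n (u : 'cV[R]_n) : N (act phi j u) <= N u.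
Proof. rewrite /act; case: eqP => _ //; exact: phi_norm. Qed.

Lemma act_lip (phi : forall n, 'cV[R]_n -> 'cV[R]_n)
  (hphi_lip : forall n (u v : 'cV[R]_n), N (phi n u - phi n v) <= N (u - v))
  j n (u v : 'cV[R]_n) : N (act phi j u - act phi j v) <= N (u - v).
Proof. rewrite /act; case: eqP => _ //; exact: hphi_lip. Qed.

Lemma preS (delta : nat -> nat) (phi : forall n, 'cV[R]_n -> 'cV[R]_n)
  (W : forall j : nat, 'M[R]_(delta j, delta j.-1)) x j :
  pre phi W x j.+1 = W j.+1 *m act phi j (pre phi W x j).
Proof. by []. Qed.

Lemma pre_eq (delta : nat -> nat) (phi : forall n, 'cV[R]_n -> 'cV[R]_n)
  (W1 W2 : forall j : nat, 'M[R]_(delta j, delta j.-1)) x j :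
  (forall i, (1 <= i <= j)%N -> W1 i = W2 i) -> pre phi W1 x j = pre phi W2 x j.
Proof.
elim: j => [//|j IH] H /=.
rewrite H ?leqnn // IH // => i /andP [i1 ij]; apply: H; rewrite i1 /=.
exact: leqW.
Qed.

End Main.

Local Notation N := (e2norm (R:=_)).

Theorem lemma1 (R : realType) (d : nat) (delta : nat -> nat) (Rad : R)
  (Mats : forall j : nat, 'M[R]_(delta j, delta j.-1))
  (alpha : nat -> R)
  (phi : forall n, 'cV[R]_n -> 'cV[R]_n)
  (phio : 'cV[R]_(delta d) -> 'cV[R]_(delta d))
  (k : nat) (W : forall j : nat, 'M[R]_(delta j, delta j.-1))
  (hd : (2 <= d)%N)
  (hdelta : forall j, (j <= d)%N -> (0 < delta j)%N)
  (hRad : 0 < Rad)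
  (hM : forall j, (1 <= j <= d)%N -> 0 < specnorm (Mats j))
  (halpha : forall j, (1 <= j <= d)%N -> 0 < alpha j)
  (hphi_lip : forall n (u v : 'cV[R]_n),
      e2norm (phi n u - phi n v) <= e2norm (u - v))
  (hphi0 : forall n, phi n 0 = 0)
  (hphio : phio = id \/ phio = @softmax R (delta d))
  (hk : (1 <= k <= d)%N)
  (hW : forall i, (1 <= i <= k)%N ->
      specnorm (W i - Mats i) <= alpha i * specnorm (Mats i)) :
  forall x : 'cV[R]_(delta 0%N), e2norm x <= Rad ->
  e2norm (net phi phio (fun j => if (j <= k)%N then W j else Mats j) x
          - net phi phio (fun j => if (j < k)%N then W j else Mats j) x)
  <= alpha k * expR (\sum_(1 <= i < k) alpha i)
       * (\prod_(1 <= j < d.+1) specnorm (Mats j)) * e2norm x.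
Proof.
move=> x hx.
have [k' ek] : exists k', k = k'.+1 by case: (k) hk => [//|k0] _; exists k0.
subst k.
set m := fun j => specnorm (Mats j).
have m0 j : (1 <= j <= d)%N -> 0 <= m j by move=> /hM /ltW.
have a0 j : (1 <= j <= d)%N -> 0 <= alpha j by move=> /halpha /ltW.
have kd : (k'.+1 <= d)%N by case/andP: hk.
have Wb i (w : 'cV[R]_(delta i.-1)) : (1 <= i <= k'.+1)%N ->
    N (W i *m w) <= (1 + alpha i) * m i * N w.
  move=> hi.
  have -> : W i = (W i - Mats i) + Mats i by rewrite subrK.
  rewrite mulmxDl; apply: le_trans (e2normD _ _) _.
  have h1 := specnorm_bound (W i - Mats i) w.
  have h2 := specnorm_bound (Mats i) w.
  have h3 := hW i hi.
  have nw := e2norm_ge0 w.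
  rewrite -/(m i) in h2 h3 *.
  have : 0 <= m i.
    apply: m0; case/andP: hi => -> /= h; exact: leq_trans h kd.
  nra.
set A := (fun j => if (j <= k'.+1)%N then W j else Mats j).
set B := (fun j => if (j < k'.+1)%N then W j else Mats j).
have grow j : (j <= k')%N ->
    N (pre phi B x j) <= (\prod_(1 <= i < j.+1) ((1 + alpha i) * m i)) * N x.
  elim: j => [_|j IH hj] /=; first by rewrite big_geq // mul1r.
  rewrite big_nat_recr //= /B ltnS hj.
  apply: le_trans (Wb _ _ _) _; first by rewrite /= ltnS ltnW.
  have hjd : (1 <= j.+1 <= d)%N by rewrite /= (leq_trans _ kd) // ltnS ltnW.
  have pa : 0 <= (1 + alpha j.+1) * m j.+1.
    by rewrite mulr_ge0 ?m0 // addr_ge0 ?a0.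
  set q := N (act _ _ _).
  rewrite [leLHS]mulrC mulrAC ler_wpM2r //.
  apply: le_trans (act_norm hphi_lip hphi0 _ _) _.
  exact: IH (ltnW hj).
have PAB : pre phi A x k' = pre phi B x k'.
  apply: pre_eq => i /andP [_ ik]; by rewrite /A /B ltnS ik (leq_trans ik (leqnSn _)).
set P := pre phi B x k'.
have base : N (pre phi A x k'.+1 - pre phi B x k'.+1) <= alpha k'.+1 * m k'.+1 * N P.
  rewrite /= PAB -/P /A /B leqnn ltnn -mulmxBl.
  apply: le_trans (specnorm_bound _ _) _.
  have := hW k'.+1 (leqnn _).
  have := act_norm hphi_lip hphi0 k' P.
  have := e2norm_ge0 (act phi k' P).
  have := specnorm_ge0 (W k'.+1 - Mats k'.+1).
  have : 0 <= alpha k'.+1 * m k'.+1 by rewrite mulr_ge0 ?a0 ?m0.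
  rewrite -/(m k'.+1); nra.
have prop t : (k'.+1 + t <= d)%N ->
    N (pre phi A x (k'.+1 + t) - pre phi B x (k'.+1 + t)) <=
    alpha k'.+1 * m k'.+1 * N P * \prod_(k'.+2 <= i < (k'.+1 + t).+1) m i.
  elim: t => [_|t IH ht]; first by rewrite addn0 big_geq // mulr1.
  rewrite addnS big_nat_recr; last by rewrite ltnS leq_addr.
  rewrite !preS {1}/A {1}/B !ifF; last 2 first.
  - by apply/negP; lia.
  - by apply/negP; lia.
  rewrite -mulmxBr; apply: le_trans (specnorm_bound _ _) _.
  have ht' : (k'.+1 + t <= d)%N by rewrite ltnW // -addnS.
  have := IH ht'.
  have := act_lip hphi_lip (k'.+1 + t) (pre phi A x (k'.+1 + t)) (pre phi B x (k'.+1 + t)).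
  have : 0 <= m (k'.+1 + t).+1 by rewrite m0 // -addnS ht andbT.
  rewrite -/A -/B -/(m _).
  set L := N (act _ _ _ - _). set D := N (_ - _).
  move=> h1 h2 h3; rewrite mulrA mulrC.
  rewrite ler_wpM2r //; exact: le_trans h2 h3.
have [t et] : exists t, d = (k'.+1 + t)%N by exists (d - k'.+1)%N; rewrite subnKC.
have fin := prop t (eq_leq (esym et)).
rewrite -et in fin.
have step0 : N (net phi phio A x - net phi phio B x) <=
             N (pre phi A x d - pre phi B x d).
  rewrite /net; case: hphio => ->; first by [].
  exact: softmax_lip.
have prod_ge0 lo hi (F : nat -> R) : (forall i, (lo <= i < hi)%N -> 0 <= F i) ->
    0 <= \prod_(lo <= i < hi) F i.
  move=> H; rewrite big_seq; apply: prodr_ge0 => i; rewrite mem_index_iota; exact: H.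
have NP := grow k' (leqnn _); rewrite -/P in NP.
rewrite big_split /= in NP.
set Pa := \prod_(1 <= i < k'.+1) (1 + alpha i) in NP.
set Pm1 := \prod_(1 <= i < k'.+1) m i in NP.
set Pm2 := \prod_(k'.+2 <= i < d.+1) m i in fin.
set E := expR (\sum_(1 <= i < k'.+1) alpha i).
have PaE : Pa <= E.
  rewrite /E expR_sum /Pa big_seq [leRHS]big_seq; apply: ler_prod => i.
  rewrite mem_index_iota => /andP [i1 ik].
  have hi : (1 <= i <= d)%N by rewrite i1 /= (leq_trans (ltnW ik)).
  by rewrite addr_ge0 ?a0 ?expR_ge1Dx.
have split : \prod_(1 <= j < d.+1) specnorm (Mats j) = Pm1 * m k'.+1 * Pm2.
  rewrite (big_cat_nat (n := k'.+1)) //=; last by rewrite ltnS ltnW.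
  by rewrite (big_ltn (m := k'.+1)) ?ltnS // mulrA.
rewrite split.
have Pa0 : 0 <= Pa.
  apply: prod_ge0 => i /andP [i1 ik]; rewrite addr_ge0 ?a0 //.
  by rewrite i1 /= (leq_trans (ltnW ik)).
have Pm10 : 0 <= Pm1.
  apply: prod_ge0 => i /andP [i1 ik]; rewrite m0 //.
  by rewrite i1 /= (leq_trans (ltnW ik)).
have Pm20 : 0 <= Pm2.
  apply: prod_ge0 => i /andP [i1 ik]; rewrite m0 //.
  by rewrite ltnS in ik; rewrite ik andbT (leq_trans _ i1).
have ak0 : 0 <= alpha k'.+1 * m k'.+1 by rewrite mulr_ge0 ?a0 ?m0 // kd.
have nx := e2norm_ge0 x.
apply: le_trans step0 _; apply: le_trans fin _.
apply: (@le_trans _ _ (alpha k'.+1 * m k'.+1 * (E * Pm1 * N x) * Pm2)).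
  rewrite ler_wpM2r // ler_wpM2l //; apply: le_trans NP _.
  by rewrite ler_wpM2r // ler_wpM2r.
by rewrite le_eqVlt; apply/orP; left; apply/eqP; ring.
Qed.
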